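(* The one-dimensional subalgebras of ${\rm A}_4$ are exactly $\langle e_1\rangle$, $\langle e_2\rangle$, $\langle e_1-e_2\rangle$, $\langle e_1+e_2\pm \mathrm{i}e_3\rangle$ and $\langle e_1-e_2\pm\mathrm{i}e_3\rangle$. Up to automorphisms of ${\rm A}_4$, every one-dimensional subalgebra is equivalent to one of $\langle e_1\rangle$, $\langle e_2\rangle$, $\langle e_1-e_2\rangle$, $\langle e_1+e_2+\mathrm{i}e_3\rangle$, $\langle e_1-e_2+\mathrm{i}e_3\rangle$.
   Context: ${\rm A}_4$ is the complex algebra with basis $e_1,e_2,e_3$, unit $e_1$ ($e_1e_i=e_ie_1=e_i$), $e_2e_2=e_2$ and $e_3e_3=-e_1+e_2$; all other products of basis elements are zero. $\mathrm{i}=\sqrt{-1}$. A subalgebra is a linear subspace closed under multiplication (it need not contain $e_1$). Equivalence up to automorphisms means one is mapped onto the other by an algebra automorphism. $\langle S\rangle$ denotes linear span. *)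

(* Defs.v *)
(* The algebra A_4 over an algebraically closed numeric field
   C (this includes the complex numbers), carrier 'rV[C]_3 with coordinates
   w.r.t. the basis e1, e2, e3. *)
From HB Require Import structures.
From mathcomp Require Import all_boot all_order all_algebra.
Set Implicit Arguments. Unset Strict Implicit. Unset Printing Implicit Defensive.
Import Order.TTheory GRing.Theory Num.Theory.
Local Open Scope ring_scope.

Section A4.
Variable C : numClosedFieldType.

Definition vec3 (a b c : C) : 'rV[C]_3 := \row_(i < 3) nth 0 [:: a; b; c] i.

Definition e1 : 'rV[C]_3 := vec3 1 0 0.
Definition e2 : 'rV[C]_3 := vec3 0 1 0.
Definition e3 : 'rV[C]_3 := vec3 0 0 1.

Definition c1 (x : 'rV[C]_3) : C := x 0 (inord 0).
Definition c2 (x : 'rV[C]_3) : C := x 0 (inord 1).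
Definition c3 (x : 'rV[C]_3) : C := x 0 (inord 2).

(* bilinear extension of: e1 unit, e2 e2 = e2, e3 e3 = -e1 + e2, other
   products of basis elements zero *)
Definition A4mul (x y : 'rV[C]_3) : 'rV[C]_3 :=
  vec3 (c1 x * c1 y - c3 x * c3 y)
       (c1 x * c2 y + c2 x * c1 y + c2 x * c2 y + c3 x * c3 y)
       (c1 x * c3 y + c3 x * c1 y).

Definition is_subalgebra (U : {vspace 'rV[C]_3}) : Prop :=
  forall x y, x \in U -> y \in U -> A4mul x y \in U.

Definition is_automorphism (f : 'rV[C]_3 -> 'rV[C]_3) : Prop :=
  [/\ forall (a : C) x y, f (a *: x + y) = a *: f x + f y,
      bijective f &
      forall x y, f (A4mul x y) = A4mul (f x) (f y)].

Definition maps_onto (f : 'rV[C]_3 -> 'rV[C]_3) (U W : {vspace 'rV[C]_3}) : Prop :=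
  (forall u, u \in U -> f u \in W) /\ (forall w, w \in W -> exists2 u, u \in U & f u = w).

Definition equiv_aut (U W : {vspace 'rV[C]_3}) : Prop :=
  exists f, is_automorphism f /\ maps_onto f U W.

End A4.

(* Main.v *)
Require Import Defs.
From HB Require Import structures.
From mathcomp Require Import all_boot all_order all_algebra.
From mathcomp Require Import ring.
Import Order.TTheory GRing.Theory Num.Theory.
Local Open Scope ring_scope.

Section H.
Variable C : numClosedFieldType.
Implicit Types a b c : C.

Lemma c1v a b c : c1 (vec3 a b c) = a.
Proof. by rewrite /c1 /vec3 mxE inordK. Qed.
Lemma c2v a b c : c2 (vec3 a b c) = b.
Proof. by rewrite /c2 /vec3 mxE inordK. Qed.
Lemma c3v a b c : c3 (vec3 a b c) = c.
Proof. by rewrite /c3 /vec3 mxE inordK. Qed.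

Lemma vec3E (x : 'rV[C]_3) : x = vec3 (c1 x) (c2 x) (c3 x).
Proof.
apply/rowP => i; rewrite /vec3 /c1 /c2 /c3 mxE.
case: i => [[|[|[|//]]]] Hi /=; congr (x 0 _); apply: val_inj; by rewrite /= inordK.
Qed.

Lemma vec3_eq a b c a' b' c' : a = a' -> b = b' -> c = c' -> vec3 a b c = vec3 a' b' c'.
Proof. by move=> -> -> ->. Qed.

Lemma vec3_inj a b c a' b' c' : vec3 a b c = vec3 a' b' c' -> [/\ a = a', b = b' & c = c'].
Proof. by move=> H; split; [move: (congr1 (@c1 C) H)|move: (congr1 (@c2 C) H)|move: (congr1 (@c3 C) H)]; rewrite !(c1v,c2v,c3v). Qed.

Lemma scale_vec3 k a b c : k *: vec3 a b c = vec3 (k * a) (k * b) (k * c).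
Proof. by apply/rowP => i; rewrite !mxE; case: i => [[|[|[|//]]]] Hi. Qed.

Lemma add_vec3 a b c a' b' c' : vec3 a b c + vec3 a' b' c' = vec3 (a + a') (b + b') (c + c').
Proof. by apply/rowP => i; rewrite !mxE; case: i => [[|[|[|//]]]] Hi. Qed.

Lemma opp_vec3 a b c : - vec3 a b c = vec3 (- a) (- b) (- c).
Proof. by apply/rowP => i; rewrite !mxE; case: i => [[|[|[|//]]]] Hi. Qed.

Lemma mul_vec3 a b c a' b' c' : A4mul (vec3 a b c) (vec3 a' b' c') =
  vec3 (a * a' - c * c') (a * b' + b * a' + b * b' + c * c') (a * c' + c * a').
Proof. by rewrite /A4mul !(c1v, c2v, c3v). Qed.

Lemma vline_scale k (y : 'rV[C]_3) : k != 0 -> <[k *: y]>%VS = <[y]>%VS.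
Proof.
move=> k0; apply/vspaceP => v; apply/vlineP/vlineP => -[t ->].
  by exists (t * k); rewrite scalerA.
by exists (t / k); rewrite scalerA mulfVK.
Qed.

Definition L7 : seq {vspace 'rV[C]_3} := [:: <[vec3 1 0 0]>%VS; <[vec3 0 1 0]>%VS; <[vec3 1 (-1) 0]>%VS;
  <[vec3 1 1 'i]>%VS; <[vec3 1 1 (-'i)]>%VS; <[vec3 1 (-1) 'i]>%VS; <[vec3 1 (-1) (-'i)]>%VS].

Lemma inL7 m (y : 'rV[C]_3) : m != 0 -> <[y]>%VS \in L7 -> <[m *: y]>%VS \in L7.
Proof. by move=> m0; rewrite vline_scale. Qed.

Lemma classify a b c k : vec3 a b c != 0 ->
  a * a - c * c = k * a -> a * b + b * a + b * b + c * c = k * b -> a * c + c * a = k * c ->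
  <[vec3 a b c]>%VS \in L7.
Proof.
move=> nz h1 h2 h3.
have [c0|c0] := eqVneq c 0.
  subst c.
  have [a0|a0] := eqVneq a 0.
    subst a.
    have b0 : b != 0 by apply: contraNneq nz => ->; apply/eqP/rowP => i; rewrite !mxE; case: i => [[|[|[|//]]]] Hi.
    have -> : vec3 0 b 0 = b *: vec3 0 1 0 by rewrite scale_vec3; apply: vec3_eq; ring.
    by apply: inL7 => //; rewrite /L7 !inE eqxx ?orbT.
  have ka : k = a.
    apply/eqP; rewrite eq_sym -subr_eq0; apply/eqP; apply: (mulfI a0).
    by rewrite mulr0; transitivity ((a * a - 0 * 0) - k * a); [ring | rewrite h1 subrr].
  subst k.
  have : b * (a + b) = 0.
    by transitivity ((a * b + b * a + b * b + 0 * 0) - a * b); [ring | rewrite h2 subrr].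
  move/eqP; rewrite mulf_eq0 => /orP[/eqP b0|].
    subst b.
    have -> : vec3 a 0 0 = a *: vec3 1 0 0 by rewrite scale_vec3; apply: vec3_eq; ring.
    by apply: inL7 => //; rewrite /L7 !inE eqxx ?orbT.
  rewrite (addrC a) addr_eq0 => /eqP ->.
  have -> : vec3 a (- a) 0 = a *: vec3 1 (-1) 0 by rewrite scale_vec3; apply: vec3_eq; ring.
  by apply: inL7 => //; rewrite /L7 !inE eqxx ?orbT.
have k2 : k = a + a.
  apply/eqP; rewrite eq_sym -subr_eq0; apply/eqP; apply: (mulfI c0).
  by rewrite mulr0; transitivity ((a * c + c * a) - k * c); [ring | rewrite h3 subrr].
subst k.
have hc : (c - 'i * a) * (c + 'i * a) = 0.
  transitivity (- ((a * a - c * c) - (a + a) * a) - ('i * 'i + 1) * (a * a)); first by ring.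
  by rewrite h1 mulCii addNr subrr; ring.
have a0 : a != 0.
  apply: contraNneq c0 => a0; subst a.
  move/eqP: hc; rewrite !mulr0 subr0 addr0 mulf_eq0 orbb. by [].
have hb : (b - a) * (b + a) = 0.
  transitivity ((a * b + b * a + b * b + c * c) - (a + a) * b - (c - 'i * a) * (c + 'i * a) - ('i * 'i + 1) * (a * a)); first by ring.
  by rewrite h2 hc mulCii addNr; ring.
move/eqP: hb; rewrite mulf_eq0 subr_eq0 addr_eq0 => /orP[] /eqP ->;
move/eqP: hc; rewrite mulf_eq0 subr_eq0 addr_eq0 => /orP[] /eqP ->.
- have -> : vec3 a a ('i * a) = a *: vec3 1 1 'i by rewrite scale_vec3; apply: vec3_eq; ring.
  by apply: inL7 => //; rewrite /L7 !inE eqxx ?orbT.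
- have -> : vec3 a a (- ('i * a)) = a *: vec3 1 1 (-'i) by rewrite scale_vec3; apply: vec3_eq; ring.
  by apply: inL7 => //; rewrite /L7 !inE eqxx ?orbT.
- have -> : vec3 a (-a) ('i * a) = a *: vec3 1 (-1) 'i by rewrite scale_vec3; apply: vec3_eq; ring.
  by apply: inL7 => //; rewrite /L7 !inE eqxx ?orbT.
- have -> : vec3 a (-a) (- ('i * a)) = a *: vec3 1 (-1) (-'i) by rewrite scale_vec3; apply: vec3_eq; ring.
  by apply: inL7 => //; rewrite /L7 !inE eqxx ?orbT.
Qed.

Lemma vec3_ind (P : 'rV[C]_3 -> Prop) : (forall a b c, P (vec3 a b c)) -> forall x, P x.
Proof. by move=> H x; rewrite (vec3E x). Qed.

Lemma mulZZ s t (x y : 'rV[C]_3) : A4mul (s *: x) (t *: y) = (s * t) *: A4mul x y.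
Proof.
move: x y; apply: vec3_ind => a b c; apply: vec3_ind => a' b' c'.
by rewrite /= !scale_vec3 !mul_vec3 ?scale_vec3 !(c1v,c2v,c3v); apply: vec3_eq; ring.
Qed.

Lemma line_ok (y : 'rV[C]_3) k : y != 0 -> A4mul y y = k *: y ->
  \dim <[y]> = 1%N /\ is_subalgebra <[y]>%VS.
Proof.
move=> y0 hy; split; first by rewrite dim_vline y0.
move=> u v /vlineP[s ->] /vlineP[t ->].
by rewrite mulZZ hy scalerA memvZ // memv_line.
Qed.

Lemma c1_0 : c1 (0 : 'rV[C]_3) = 0.
Proof. by rewrite /c1 mxE. Qed.

Lemma nz1 b c : vec3 1 b c != 0 :> 'rV[C]_3.
Proof. by apply/eqP => /(congr1 (@c1 C)); rewrite c1v c1_0; apply/eqP; exact: oner_neq0. Qed.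

Lemma nz2 : vec3 0 1 0 != 0 :> 'rV[C]_3.
Proof. by apply/eqP => /(congr1 (@c2 C)); rewrite c2v /c2 mxE; apply/eqP; exact: oner_neq0. Qed.

Lemma L7_ok U : U \in L7 -> \dim U = 1%N /\ is_subalgebra U.
Proof.
rewrite /L7.
case/predU1P => [->|H].
  by apply: (line_ok _ 1); [exact: nz1 | rewrite mul_vec3 scale_vec3; apply: vec3_eq; ring].
case/predU1P: H => [->|H].
  by apply: (line_ok _ 1); [exact: nz2 | rewrite mul_vec3 scale_vec3; apply: vec3_eq; ring].
case/predU1P: H => [->|H].
  by apply: (line_ok _ 1); [exact: nz1 | rewrite mul_vec3 scale_vec3; apply: vec3_eq; ring].
case/predU1P: H => [->|H].
  by apply: (line_ok _ 2); [exact: nz1 | rewrite mul_vec3 scale_vec3; apply: vec3_eq; rewrite ?mulrNN ?mulCii; ring].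
case/predU1P: H => [->|H].
  by apply: (line_ok _ 2); [exact: nz1 | rewrite mul_vec3 scale_vec3; apply: vec3_eq; rewrite ?mulrNN ?mulCii; ring].
case/predU1P: H => [->|H].
  by apply: (line_ok _ 2); [exact: nz1 | rewrite mul_vec3 scale_vec3; apply: vec3_eq; rewrite ?mulrNN ?mulCii; ring].
case/predU1P: H => [->|//].
  by apply: (line_ok _ 2); [exact: nz1 | rewrite mul_vec3 scale_vec3; apply: vec3_eq; rewrite ?mulrNN ?mulCii; ring].
Qed.

Lemma sub_L7 U : \dim U = 1%N -> is_subalgebra U -> U \in L7.
Proof.
move=> dU sU.
have x0 : vpick U != 0 by rewrite vpick0; apply/eqP => U0; move: dU; rewrite U0 dimv0.
have UE : U = <[vpick U]>%VS.
  apply/eqP; rewrite eq_sym eqEdim dim_vline x0 dU leqnn andbT -memvE; exact: memv_pick.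
rewrite UE.
have /vlineP[k hk] : A4mul (vpick U) (vpick U) \in <[vpick U]>%VS by rewrite -UE; apply: sU; exact: memv_pick.
move: x0 hk; move: (vpick U); apply: vec3_ind => a b c nz.
rewrite mul_vec3 scale_vec3 => /vec3_inj[h1 h2 h3].
exact: (classify _ _ _ _ nz h1 h2 h3).
Qed.

Definition cnj (x : 'rV[C]_3) : 'rV[C]_3 := vec3 (c1 x) (c2 x) (- c3 x).

Lemma cnjv a b c : cnj (vec3 a b c) = vec3 a b (- c).
Proof. by rewrite /cnj !(c1v, c2v, c3v). Qed.

Lemma cnj_aut : is_automorphism cnj.
Proof.
split.
- move=> k; apply: vec3_ind => a b c; apply: vec3_ind => a' b' c'.
  by rewrite /= (scale_vec3 k a b c) add_vec3 !cnjv scale_vec3 add_vec3; apply: vec3_eq; ring.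
- by exists cnj; apply: vec3_ind => a b c; rewrite !cnjv opprK.
- apply: vec3_ind => a b c; apply: vec3_ind => a' b' c'.
  rewrite /= (mul_vec3 a b c) (cnjv a b c) (cnjv a' b' c'). rewrite mul_vec3 /cnj !(c1v,c2v,c3v); apply: vec3_eq; ring.
Qed.

Lemma cnjZ k x : cnj (k *: x) = k *: cnj x.
Proof. by move: x; apply: vec3_ind => a b c; rewrite scale_vec3 !cnjv scale_vec3; apply: vec3_eq; ring. Qed.

Lemma cnj_line y : equiv_aut <[y]>%VS <[cnj y]>%VS.
Proof.
exists cnj; split; first exact: cnj_aut.
split.
  by move=> u /vlineP[k ->]; rewrite cnjZ memvZ // memv_line.
by move=> w /vlineP[k ->]; exists (k *: y); [rewrite memvZ // memv_line | rewrite cnjZ].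
Qed.

Lemma id_equiv (U : {vspace 'rV[C]_3}) : equiv_aut U U.
Proof.
exists id; split; first by split => //; exists id.
by split => // w wU; exists w.
Qed.
End H.

Theorem mainTheorem10 (C : numClosedFieldType) :
  (forall U : {vspace 'rV[C]_3},
     (\dim U = 1%N /\ is_subalgebra U) <->
     U \in [:: <[e1 C]>%VS; <[e2 C]>%VS; <[e1 C - e2 C]>%VS;
               <[e1 C + e2 C + 'i *: e3 C]>%VS;
               <[e1 C + e2 C - 'i *: e3 C]>%VS;
               <[e1 C - e2 C + 'i *: e3 C]>%VS;
               <[e1 C - e2 C - 'i *: e3 C]>%VS]) /\
  (forall U : {vspace 'rV[C]_3},
     \dim U = 1%N -> is_subalgebra U ->
     exists2 W : {vspace 'rV[C]_3},
       W \in [:: <[e1 C]>%VS; <[e2 C]>%VS; <[e1 C - e2 C]>%VS;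
                 <[e1 C + e2 C + 'i *: e3 C]>%VS;
                 <[e1 C - e2 C + 'i *: e3 C]>%VS] &
       equiv_aut U W).
Proof.
have E3 : e1 C - e2 C = vec3 1 (-1) 0.
  by rewrite /e1 /e2 opp_vec3 add_vec3; apply: vec3_eq; ring.
have E4 : e1 C + e2 C + 'i *: e3 C = vec3 1 1 'i.
  by rewrite /e1 /e2 /e3 scale_vec3 !add_vec3; apply: vec3_eq; ring.
have E5 : e1 C + e2 C - 'i *: e3 C = vec3 1 1 (-'i).
  by rewrite /e1 /e2 /e3 scale_vec3 opp_vec3 !add_vec3; apply: vec3_eq; ring.
have E6 : e1 C - e2 C + 'i *: e3 C = vec3 1 (-1) 'i.
  by rewrite /e1 /e2 /e3 scale_vec3 opp_vec3 !add_vec3; apply: vec3_eq; ring.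
have E7 : e1 C - e2 C - 'i *: e3 C = vec3 1 (-1) (-'i).
  by rewrite /e1 /e2 /e3 scale_vec3 !opp_vec3 !add_vec3; apply: vec3_eq; ring.
rewrite E4 E5 E6 E7 E3 /e1 /e2.
split.
  move=> U; split => [[dU sU]|H]; first exact: (sub_L7 _ _ dU sU).
  exact: (L7_ok _ _ H).
move=> U dU sU.
have := sub_L7 _ _ dU sU; rewrite /L7.
case/predU1P => [->|H].
  by exists <[vec3 1 0 0]>%VS; [rewrite !inE eqxx ?orbT | exact: id_equiv].
case/predU1P: H => [->|H].
  by exists <[vec3 0 1 0]>%VS; [rewrite !inE eqxx ?orbT | exact: id_equiv].
case/predU1P: H => [->|H].
  by exists <[vec3 1 (-1) 0]>%VS; [rewrite !inE eqxx ?orbT | exact: id_equiv].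
case/predU1P: H => [->|H].
  by exists <[vec3 1 1 'i]>%VS; [rewrite !inE eqxx ?orbT | exact: id_equiv].
case/predU1P: H => [->|H].
  exists <[vec3 1 1 'i]>%VS; first by rewrite !inE eqxx ?orbT.
  by have := cnj_line C (vec3 1 1 (-'i)); rewrite /cnj !(c1v, c2v, c3v) opprK.
case/predU1P: H => [->|H].
  by exists <[vec3 1 (-1) 'i]>%VS; [rewrite !inE eqxx ?orbT | exact: id_equiv].
case/predU1P: H => [->|//].
exists <[vec3 1 (-1) 'i]>%VS; first by rewrite !inE eqxx ?orbT.
by have := cnj_line C (vec3 1 (-1) (-'i)); rewrite /cnj !(c1v, c2v, c3v) opprK.
Qed.
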